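(* Let $n\ge1$ and $P=\Phi^+(A_n)=\{(i,j)\colon 1\le i,j\le n,\ i+j\ge n+1\}$. Then $\sum_{p\in P}(-1)^{\mathrm{rk}(p)}\mathbb{1}_p\equiv \frac{n}{2}$, where $\mathrm{rk}(i,j)=i+j-(n+1)$.
   Context: $P$ is ordered by $(i,j)\le(i',j')$ iff $i\le i'$ and $j\le j'$; $\mathrm{rk}$ is its rank function. $\mathcal{J}(P)$ is the set of order ideals of $P$. For $x\in P$, $I\in\mathcal{J}(P)$: $\mathbb{1}_x(I)=1$ if $x\in I$, else $0$; $T_x^+(I)=1$ if $x$ is a minimal element of $P\setminus I$, else $0$; $T_x^-(I)=1$ if $x$ is a maximal element of $I$, else $0$; $T_x=T_x^+-T_x^-$. For $f,g\colon\mathcal{J}(P)\to\mathbb{R}$, $f\equiv g$ means $f-g=\sum_{x\in P}c_xT_x$ for some real constants $c_x$; a real number denotes the corresponding constant function. *)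

(* Defs.v *)
From HB Require Import structures.
From mathcomp Require Import all_boot all_order all_algebra.
From mathcomp Require Import reals.
Set Implicit Arguments. Unset Strict Implicit. Unset Printing Implicit Defensive.
Import Order.TTheory GRing.Theory Num.Theory.
Local Open Scope ring_scope.

(* Elements (i,j) of [1..n]^2 are encoded 0-based as (i-1, j-1) : 'I_n * 'I_n. *)
Definition pt (n : nat) := ('I_n * 'I_n)%type.

(* membership in P = Phi^+(A_n): i + j >= n + 1, i.e. (i-1)+(j-1) >= n-1 *)
Definition inP (n : nat) (x : pt n) : bool := (n.-1 <= x.1 + x.2)%N.

Definition leP (n : nat) (x y : pt n) : bool := (x.1 <= y.1)%N && (x.2 <= y.2)%N.

(* rank: rk(i,j) = i + j - (n+1) = (i-1)+(j-1) - (n-1) *)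
Definition rk (n : nat) (x : pt n) : nat := (x.1 + x.2 - n.-1)%N.

Definition is_ideal (n : nat) (I : {set pt n}) : bool :=
  [forall x, (x \in I) ==>
     (inP x && [forall y, (inP y && leP y x) ==> (y \in I)])].

Definition ind (R : realType) (n : nat) (x : pt n) (I : {set pt n}) : R :=
  if x \in I then 1 else 0.

Definition Tplus (R : realType) (n : nat) (x : pt n) (I : {set pt n}) : R :=
  if [&& inP x, x \notin I &
        [forall y, (inP y && (y \notin I) && leP y x) ==> (y == x)]]
  then 1 else 0.

Definition Tminus (R : realType) (n : nat) (x : pt n) (I : {set pt n}) : R :=
  if (x \in I) && [forall y, ((y \in I) && leP x y) ==> (y == x)]
  then 1 else 0.

Definition toggle (R : realType) (n : nat) (x : pt n) (I : {set pt n}) : R :=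
  Tplus R x I - Tminus R x I.

Definition tequiv (R : realType) (n : nat) (f g : {set pt n} -> R) : Prop :=
  exists c : pt n -> R, forall I : {set pt n}, is_ideal I ->
    f I - g I = \sum_(x : pt n | inP x) c x * toggle R x I.

(* Main.v *)
Require Import Defs.
From HB Require Import structures.
From mathcomp Require Import all_boot all_order all_algebra.
From mathcomp Require Import reals.
From mathcomp Require Import zify ring lra.
Set Implicit Arguments. Unset Strict Implicit. Unset Printing Implicit Defensive.
Import Order.TTheory GRing.Theory Num.Theory.
Local Open Scope ring_scope.

Definition inI n (I : {set pt n}) (i j : nat) : bool :=
  [exists x : pt n, [&& x \in I, (x.1 : nat) == i & (x.2 : nat) == j]].

Lemma pt_eq n (x y : pt n) : (x.1 : nat) = y.1 -> (x.2 : nat) = y.2 -> x = y.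
Proof. by case: x y => [a b] [c d] /= /val_inj -> /val_inj ->. Qed.

Lemma inI_pt n (I : {set pt n}) (x : pt n) : inI I x.1 x.2 = (x \in I).
Proof.
apply/existsP/idP => [[y /and3P[yI /eqP e1 /eqP e2]]|xI]; last first.
  by exists x; rewrite xI !eqxx.
by rewrite -(pt_eq e1 e2).
Qed.

Lemma inI_bound n (I : {set pt n}) i j : inI I i j -> ((i < n) && (j < n))%N.
Proof. by case/existsP => y /and3P[_ /eqP <- /eqP <-]; rewrite !ltn_ord. Qed.

Lemma inI_mono n (I : {set pt n}) i j i' j' : is_ideal I -> inI I i j ->
  (i' <= i)%N -> (j' <= j)%N -> (n.-1 <= i' + j')%N -> inI I i' j'.
Proof.
move=> hI hij li lj hp.
have /andP[hi hj] := inI_bound hij.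
case/existsP: hij => y /and3P[yI /eqP e1 /eqP e2].
have hi' : (i' < n)%N by lia.
have hj' : (j' < n)%N by lia.
apply/existsP; exists (Ordinal hi', Ordinal hj'); rewrite !eqxx !andbT.
move/forallP: hI => /(_ y) /implyP /(_ yI) /andP[_ /forallP /(_ (Ordinal hi', Ordinal hj'))].
subst i j; rewrite /inP /Defs.leP /= => /implyP; apply; rewrite hp /=; exact/andP.
Qed.

Lemma ideal_inP n (I : {set pt n}) (x : pt n) : is_ideal I -> x \in I -> inP x.
Proof. by move/forallP => /(_ x) /implyP H /H /andP[]. Qed.

Lemma Tminus_char (R : realType) n (I : {set pt n}) (x : pt n) : is_ideal I -> inP x ->
  Tminus R x I = ((x \in I) && ~~ inI I x.1.+1 x.2 && ~~ inI I x.1 x.2.+1)%:R.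
Proof.
move=> hI hx; rewrite /Tminus.
suff -> : ((x \in I) && [forall y, ((y \in I) && Defs.leP x y) ==> (y == x)]) =
  ((x \in I) && ~~ inI I x.1.+1 x.2 && ~~ inI I x.1 x.2.+1) by case: (_ && _).
case: x hx => [x1 x2]; rewrite /inP /= => hx.
case xI: ((x1, x2) \in I) => //=.
apply/forallP/andP => [H|[h1 h2] [y1 y2]].
  split; apply/negP => /existsP [[y1 y2] /and3P[yI /eqP /= e1 /eqP /= e2]];
  have := H (y1, y2); rewrite yI /Defs.leP /= e1 e2 leqnSn leqnn /= => /eqP [] e1' e2';
  subst; lia.
apply/implyP => /andP[yI /andP[/= l1 l2]].
case: (eqVneq (y1, y2) (x1, x2)) => // ne; exfalso.
have yI' : inI I y1 y2 by rewrite (inI_pt I (y1, y2)).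
case: (ltngtP x1 y1) => c1.
- by apply: (negP h1); apply: (inI_mono hI yI'); lia.
- lia.
case: (ltngtP x2 y2) => c2.
- by apply: (negP h2); apply: (inI_mono hI yI'); lia.
- lia.
by move/eqP: ne; apply; apply: pt_eq.
Qed.

Lemma Tplus_char (R : realType) n (I : {set pt n}) (x : pt n) : is_ideal I -> inP x ->
  Tplus R x I = ((x \notin I) && ((x.1 + x.2 == n.-1)%N ||
       (inI I x.1.-1 x.2 && inI I x.1 x.2.-1)))%:R.
Proof.
move=> hI hx; rewrite /Tplus hx /=.
suff -> : ((x \notin I) && [forall y, (inP y && (y \notin I) && Defs.leP y x) ==> (y == x)]) =
  ((x \notin I) && ((x.1 + x.2 == n.-1)%N ||
       (inI I x.1.-1 x.2 && inI I x.1 x.2.-1))) by case: (_ && _).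
case: x hx => [x1 x2]; rewrite /inP /= => hx.
case xI: ((x1, x2) \in I) => //=.
apply/forallP/idP => [H|H [y1 y2]].
  case: eqP => //= ne.
  have h1 : (0 < x1)%N by have := ltn_ord x2; lia.
  have h2 : (0 < x2)%N by have := ltn_ord x1; lia.
  have hi : (x1.-1 < n)%N by have := ltn_ord x1; lia.
  have hj : (x2.-1 < n)%N by have := ltn_ord x2; lia.
  apply/andP; split.
    have := H (Ordinal hi, x2); rewrite /Defs.leP /= -(inI_pt I (Ordinal hi, x2)) /= leqnn leq_pred.
    case: (inI I x1.-1 x2) => //; rewrite !andbT.
    have -> : (n.-1 <= x1.-1 + x2)%N by lia.
    move=> /implyP /(_ isT) /eqP e; move: (congr1 (fun p : pt n => nat_of_ord p.1) e) => /=; lia.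
  have := H (x1, Ordinal hj); rewrite /Defs.leP /= -(inI_pt I (x1, Ordinal hj)) /= leqnn leq_pred.
  case: (inI I x1 x2.-1) => //; rewrite !andbT.
  have -> : (n.-1 <= x1 + x2.-1)%N by lia.
  move=> /implyP /(_ isT) /eqP e; move: (congr1 (fun p : pt n => nat_of_ord p.2) e) => /=; lia.
apply/implyP => /andP[/andP[yP yI] /andP[/= l1 l2]].
case: (eqVneq (y1, y2) (x1, x2)) => // ne; exfalso.
move: yP; rewrite /inP /= => yP.
have ne' : (y1 < x1)%N || (y2 < x2)%N.
  case: (ltnP y1 x1) => //= c1; case: (ltnP y2 x2) => //= c2.
  by exfalso; move/eqP: ne; apply; apply: pt_eq => /=; lia.
case/orP: H => [/eqP e|/andP[d1 d2]]; first lia.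
move/negP: yI; apply; rewrite -(inI_pt I (y1, y2)) /=.
case/orP: ne' => c.
  by apply: (inI_mono hI d1); lia.
by apply: (inI_mono hI d2); lia.
Qed.

Definition mm n (I : {set pt n}) (j k : nat) : bool := inI I (n.-1 - j + k) j.
Definition aa n (I : {set pt n}) (j : nat) : nat := (\sum_(k < j.+1) (mm I j k : nat))%N.

Lemma prefix_lemma (L : nat) : forall (b : nat -> bool),
  (forall k, b k.+1 -> b k) -> (forall k, (L <= k)%N -> ~~ b k) ->
  forall k, b k = (k < \sum_(i < L) (b i : nat))%N.
Proof.
elim: L => [|L IH] b mono out k.
  by rewrite big_ord0; apply/negbTE/out.
rewrite big_ord_recl /=.
have IH' := IH (fun k => b k.+1) (fun k => mono k.+1) (fun k h => out k.+1 h).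
have e : (\sum_(i < L) (b (@lift L.+1 ord0 i) : nat) = \sum_(i < L) (b i.+1 : nat))%N.
  by apply: eq_bigr => i _; rewrite lift0.
rewrite e.
case b0: (b 0).
  case: k => [|k]; first by rewrite b0.
  by rewrite (IH' k).
have all0 : forall k, b k = false.
  elim=> // k' IHk; apply/negbTE/negP => /mono; by rewrite IHk.
have S0 : (\sum_(i < L) (b i.+1 : nat))%N = 0%N.
  by apply: big1 => i _; rewrite all0.
by rewrite S0 all0.
Qed.

Lemma mm_mono n (I : {set pt n}) j k : is_ideal I -> mm I j k.+1 -> mm I j k.
Proof.
move=> hI h; have /andP[b1 b2] := inI_bound h.
by apply: (inI_mono hI h); lia.
Qed.

Lemma mm_out n (I : {set pt n}) j k : (j < k)%N -> mm I j k = false.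
Proof.
move=> h; case h2: (mm I j k) => //; move: (inI_bound h2); lia.
Qed.

Lemma mm_outj n (I : {set pt n}) j k : (n <= j)%N -> mm I j k = false.
Proof. move=> h; case h2: (mm I j k) => //; move: (inI_bound h2); lia. Qed.

Lemma mm_aa n (I : {set pt n}) j k : is_ideal I -> mm I j k = (k < aa I j)%N.
Proof.
move=> hI; apply: prefix_lemma => [k'|k' hk]; first exact: mm_mono.
by rewrite mm_out.
Qed.

Lemma aa_le n (I : {set pt n}) j : is_ideal I -> (aa I j <= j.+1)%N.
Proof.
move=> hI; have := mm_out I (ltnSn j); rewrite mm_aa //; lia.
Qed.

Lemma aa_out n (I : {set pt n}) j : is_ideal I -> (n <= j)%N -> aa I j = 0%N.
Proof.
move=> hI hj; have := mm_outj I 0 hj; rewrite mm_aa //; lia.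
Qed.

Lemma aa_step n (I : {set pt n}) j : is_ideal I -> (aa I j.+1 <= (aa I j).+1)%N.
Proof.
move=> hI; rewrite leqNgt; apply/negP => h.
have : mm I j.+1 (aa I j).+1 by rewrite mm_aa.
move=> h1; have /andP[b1 b2] := inI_bound h1.
have : mm I j (aa I j).
  by apply: (inI_mono hI h1); lia.
by rewrite mm_aa // ltnn.
Qed.

Lemma x1_eq n (x : pt n) : inP x -> (x.1 : nat) = (n.-1 - x.2 + rk x)%N.
Proof. rewrite /inP /rk => h; have := ltn_ord x.2; lia. Qed.

Lemma in_mm n (I : {set pt n}) (x : pt n) : inP x -> (x \in I) = mm I x.2 (rk x).
Proof. by move=> h; rewrite -inI_pt /mm -x1_eq. Qed.

Lemma up1_mm n (I : {set pt n}) (x : pt n) : inP x -> inI I x.1.+1 x.2 = mm I x.2 (rk x).+1.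
Proof. by move=> h; rewrite /mm (x1_eq h) addnS. Qed.

Lemma up2_mm n (I : {set pt n}) (x : pt n) : inP x -> inI I x.1 x.2.+1 = mm I x.2.+1 (rk x).+1.
Proof.
move=> h; case: (ltnP x.2.+1 n) => c.
  by rewrite /mm (x1_eq h); congr inI; lia.
rewrite mm_outj //; case h2: (inI _ _ _) => //; move: (inI_bound h2); lia.
Qed.

Lemma down1_mm n (I : {set pt n}) (x : pt n) : inP x -> rk x != 0%N ->
  inI I x.1.-1 x.2 = mm I x.2 (rk x).-1.
Proof. move=> h h0; rewrite /mm; congr inI; move: h0; rewrite (x1_eq h); lia. Qed.

Lemma down2_mm n (I : {set pt n}) (x : pt n) : inP x -> rk x != 0%N ->
  inI I x.1 x.2.-1 = mm I x.2.-1 (rk x).-1.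
Proof.
move=> h h0; rewrite /mm; congr inI; move: h0; rewrite (x1_eq h).
have := ltn_ord x.2; have := ltn_ord x.1; move: h; rewrite /inP /rk; lia.
Qed.

Lemma rk0 n (x : pt n) : inP x -> (x.1 + x.2 == n.-1)%N = (rk x == 0%N).
Proof. rewrite /inP /rk => h; apply/eqP/eqP; lia. Qed.

Lemma Tplus_a (R : realType) n (I : {set pt n}) (x : pt n) : is_ideal I -> inP x ->
  Tplus R x I = (~~(rk x < aa I x.2)%N && ((rk x == 0%N) ||
     (((rk x).-1 < aa I x.2)%N && ((rk x).-1 < aa I x.2.-1)%N)))%:R.
Proof.
move=> hI h; rewrite Tplus_char // rk0 // in_mm // mm_aa //.
case: eqP => [//|/eqP h0]; rewrite /= down1_mm // down2_mm // !mm_aa //.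
Qed.

Lemma Tminus_a (R : realType) n (I : {set pt n}) (x : pt n) : is_ideal I -> inP x ->
  Tminus R x I = ((rk x < aa I x.2)%N && ~~((rk x).+1 < aa I x.2)%N &&
     ~~((rk x).+1 < aa I x.2.+1)%N)%:R.
Proof.
move=> hI h; rewrite Tminus_char // in_mm // up1_mm // up2_mm // !mm_aa //.
Qed.

Lemma ind_a (R : realType) n (I : {set pt n}) (x : pt n) : is_ideal I -> inP x ->
  ind R x I = (rk x < aa I x.2)%N%:R.
Proof. by move=> hI h; rewrite /ind in_mm // mm_aa //; case: (_ < _)%N. Qed.

Lemma inner_sum (R : realType) n j (H : nat -> R) : (j < n)%N ->
  \sum_(i < n) (if (n.-1 <= i + j)%N then H (i + j - n.-1)%N else 0) =
  \sum_(k < j.+1) H k.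
Proof.
move=> hj.
rewrite -(big_mkord xpredT (fun i => if (n.-1 <= i + j)%N then H (i + j - n.-1)%N else 0)).
rewrite (big_cat_nat _ (n := (n.-1 - j)%N)) /=; [|lia|lia].
rewrite big_nat_cond big1 ?add0r; last first.
  move=> i /andP[/andP[_ hi] _]; rewrite ifF //; apply/negbTE; rewrite -ltnNge; lia.
rewrite -{1}(add0n (n.-1 - j)%N) big_addn.
rewrite (_ : (n - (n.-1 - j))%N = j.+1); last lia.
rewrite big_mkord; apply: eq_bigr => i _.
have := ltn_ord i => hi.
rewrite ifT; last lia.
congr H; lia.
Qed.

Lemma reindex (R : realType) n (G : nat -> nat -> R) :
  \sum_(x : pt n | inP x) G x.2 (rk x) = \sum_(j < n) \sum_(k < j.+1) G j k.
Proof.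
rewrite big_mkcond /=.
transitivity (\sum_(i < n) \sum_(j < n) (if inP (i, j) then G j (rk (i, j)) else 0)).
  by rewrite pair_big /=; apply: eq_bigr => -[i j] _.
rewrite exchange_big /=; apply: eq_bigr => j _.
by rewrite -(@inner_sum R n j (G j)).
Qed.

Definition Gf (R : realType) (a p q k : nat) : R :=
  2 * ((-1) ^+ k * (k < a)%N%:R) + (~~ odd k)%:R *
   ((~~ (k < a)%N && ((k == 0%N) || (((k.-1 < a)%N) && ((k.-1 < p)%N))))%:R -
    (((k < a)%N && ~~ (k.+1 < a)%N && ~~ (k.+1 < q)%N))%:R).

Lemma bmul (R : realType) (b c : bool) : (b%:R * c%:R : R) = (b && c)%:R.
Proof. by case: b; case: c; rewrite /= ?mulr0 ?mul0r ?mulr1. Qed.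

Lemma oddE m : odd m = (m %% 2 == 1)%N.
Proof. by rewrite modn2; case: odd. Qed.

Lemma sum_pick (R : realType) (L c : nat) (f : R) :
  \sum_(k < L) (if (k == c :> nat) then f else 0) = if (c < L)%N then f else 0.
Proof.
elim: L => [|L IH]; first by rewrite big_ord0.
rewrite big_ord_recr /= IH.
case: (ltngtP c L) => h.
- by rewrite (_ : (c < L.+1)%N = true) ?addr0 //; lia.
- by rewrite (_ : (c < L.+1)%N = false) ?addr0 //; lia.
- by rewrite (_ : (c < L.+1)%N = true) ?add0r //; lia.
Qed.

Lemma sum_alt (R : realType) (L a : nat) : (a <= L)%N ->
  \sum_(k < L) ((-1) ^+ k * (k < a)%N%:R) = (odd a)%:R :> R.
Proof.
elim: L a => [|L IH] a ha.
  by rewrite big_ord0; have -> : a = 0%N by lia.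
rewrite big_ord_recr /=.
case: (leqP a L) => h.
  by rewrite IH // mulr0 addr0.
have -> : a = L.+1 by lia.
rewrite mulr1.
rewrite (eq_bigr (fun k : 'I_L => (-1) ^+ k * (k < L)%N%:R)); last first.
  move=> k _ /=; have hk := ltn_ord k.
  by rewrite (_ : (k < L.+1)%N = true) ?hk //; lia.
rewrite IH //=.
rewrite -signr_odd; case: (odd L); rewrite /= ?expr1 ?expr0; lra.
Qed.
Lemma line_sum (R : realType) (j a p pg q : nat) :
  (a <= j.+1)%N -> (q <= a.+1)%N -> (a <= pg.+1)%N -> (pg <= j)%N ->
  ((0 < j)%N -> pg = p) -> (j = 0%N -> pg = 0%N) ->
  \sum_(k < j.+1) Gf R a p q k =
  1 + (odd a && (q == a.+1))%:R - (odd pg && (a == pg.+1))%:R.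
Proof.
move=> h1 h2 h3 h4 h5 h6.
have E : forall k, (k < j.+1)%N -> Gf R a p q k =
   2 * ((-1) ^+ k * (k < a)%N%:R)
   + (if k == a then ((~~ odd a) && ((a == 0%N) || (a.-1 < pg)%N))%:R else 0)
   - (if k == a.-1 then ((0 < a)%N && ~~ odd a.-1 && ~~ (a < q)%N)%:R else 0).
  move=> k hk; rewrite /Gf mulrBr addrA; congr (_ + _ - _).
    case: (eqVneq k a) => [e|ne].
      subst k; rewrite ?eqxx bmul; apply/eqP; rewrite eqr_nat; apply/eqP; rewrite !oddE.
      case: (posnP j) => hj; [have := h6 hj | have := h5 hj]; lia.
    rewrite (_ : (_ && _) = false) ?mulr0 //; apply/negbTE; lia.
  case: (eqVneq k a.-1) => [e|ne].
    subst k; rewrite ?eqxx bmul; apply/eqP; rewrite eqr_nat; apply/eqP; rewrite !oddE; lia.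
  rewrite (_ : (_ && _) = false) ?mulr0 //; lia.
under eq_bigr => k _ do rewrite (E k (ltn_ord k)).
rewrite sumrB big_split /= -mulr_sumr sum_alt // !sum_pick.
rewrite (_ : (a.-1 < j.+1)%N = true); last lia.
have key : (2 * (odd a) + ((a < j.+1) && ~~ odd a && ((a == 0) || (a.-1 < pg))) + (odd pg && (a == pg.+1)) = 1 + (odd a && (q == a.+1)) + ((0 < a) && ~~ odd a.-1 && ~~ (a < q)))%N.
  rewrite !oddE; lia.
move: (congr1 (fun m : nat => m%:R : R) key) => /=; rewrite !natrD.
case: (a < j.+1)%N; rewrite /= ?andbF ?andbT; lra.
Qed.

Definition Pg n (I : {set pt n}) (j : nat) : nat := if j is j'.+1 then aa I j' else 0%N.
Definition gg (R : realType) n (I : {set pt n}) (j : nat) : R :=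
  (odd (Pg I j) && (aa I j == (Pg I j).+1))%:R.

Lemma main_sum (R : realType) n (I : {set pt n}) : is_ideal I ->
  \sum_(x : pt n | inP x) (2 * ((-1) ^+ rk x * ind R x I) +
      (~~ odd (rk x))%:R * toggle R x I) = n%:R.
Proof.
move=> hI.
rewrite (eq_bigr (fun x : pt n => Gf R (aa I x.2) (aa I x.2.-1) (aa I x.2.+1) (rk x))); last first.
  by move=> x hx; rewrite /Gf /toggle ind_a // Tplus_a // Tminus_a.
have := @reindex R n (fun j k => Gf R (aa I j) (aa I j.-1) (aa I j.+1) k) => /= ->.
rewrite (eq_bigr (fun j : 'I_n => 1 + (gg R I j.+1 - gg R I j))); last first.
  move=> j _; rewrite addrA.
  rewrite (@line_sum R j (aa I j) (aa I j.-1) (Pg I j) (aa I j.+1)).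
  - by rewrite /gg /Pg.
  - exact: aa_le.
  - exact: aa_step.
  - case: (nat_of_ord j) => [|j'] /=; last exact: aa_step.
    by have := @aa_le n I 0 hI.
  - case: (nat_of_ord j) => [|j'] //=; exact: aa_le.
  - by case: (nat_of_ord j).
  - by case: (nat_of_ord j).
rewrite big_split /= sumr_const card_ord.
rewrite -(big_mkord xpredT (fun j => gg R I j.+1 - gg R I j)) telescope_sumr //.
rewrite /gg /= aa_out //.
by rewrite (_ : (0 == (Pg I n).+1)%N = false) ?andbF ?subr0 ?addr0.
Qed.

Theorem corollary3p29 (R : realType) (n : nat) (hn : (1 <= n)%N) :
  tequiv (fun I : {set pt n} =>
            \sum_(p : pt n | inP p) (-1) ^+ rk p * ind R p I)
         (fun _ => n%:R / 2).
Proof.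
exists (fun x => (-1/2) * (~~ odd (rk x))%:R) => I hI.
have M := main_sum R hI.
rewrite big_split /= -mulr_sumr in M.
rewrite [RHS](eq_bigr (fun x => (-1/2) * ((~~ odd (rk x))%:R * toggle R x I))); last first.
  by move=> x _; rewrite mulrA.
rewrite -mulr_sumr.
move: M.
set A := \sum_(i | inP i) _.
set B := \sum_(i | inP i) _.
move=> M; lra.
Qed.
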